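(* For every integer $d\ge 200$ and every even integer $n\le 2^{\lfloor d/200\rfloor}$ there is an $(n,d,\alpha,\beta)$-sequence with $\alpha=\sqrt{2\ln(d)/n}$ and $\beta=1/16$.
   Context: Let $X$ be a set with $|X|$ even. An equitable bipartition of $X$ is a partition $(X_0,X_1)$ with $|X_0|=|X_1|$. A sequence $\mathcal B=(X_{1,0},X_{1,1}),\dots,(X_{d,0},X_{d,1})$ of equitable bipartitions of $X$ is $\alpha$-orthogonal if $|X_{i,\ell}\cap X_{j,\ell'}|\le(\frac14+\alpha)|X|$ for all $1\le i<j\le d$ and $\ell,\ell'\in\{0,1\}$; it is $\beta$-balanced if for every $x\ne y\in X$ the number of indices $i$ with $x,y\in X_{i,0}$ or $x,y\in X_{i,1}$ is at most $(\frac12+\beta)d$. It is an $(n,d,\alpha,\beta)$-sequence if $|X|=n$, $|\mathcal B|=d$, and $\mathcal B$ is both $\alpha$-orthogonal and $\beta$-balanced. *)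

(* Defs.v *)
From mathcomp Require Import all_boot all_order all_algebra.
From mathcomp Require Import reals exp.
Set Implicit Arguments. Unset Strict Implicit. Unset Printing Implicit Defensive.
Import Order.TTheory GRing.Theory Num.Theory.
Local Open Scope ring_scope.

Definition equitable_bipartition (n : nat) (P : {set 'I_n} * {set 'I_n}) : bool :=
  [&& P.1 :&: P.2 == set0, P.1 :|: P.2 == [set: 'I_n] & #|P.1| == #|P.2|].

(* part l of a bipartition: l = false is X_{.,0}, l = true is X_{.,1} *)
Definition bpart (n : nat) (P : {set 'I_n} * {set 'I_n}) (l : bool) : {set 'I_n} :=
  if l then P.2 else P.1.

(* A sequence of d bipartitions, indexed by 'I_d (i.e. 1..d shifted to 0..d-1). *)
Definition alpha_orthogonal (R : realType) (n d : nat)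
    (B : 'I_d -> {set 'I_n} * {set 'I_n}) (alpha : R) : Prop :=
  forall (i j : 'I_d) (l l' : bool), (i < j)%N ->
    (#|bpart (B i) l :&: bpart (B j) l'|%:R : R) <= (4^-1 + alpha) * n%:R.

Definition beta_balanced (R : realType) (n d : nat)
    (B : 'I_d -> {set 'I_n} * {set 'I_n}) (beta : R) : Prop :=
  forall x y : 'I_n, x != y ->
    (#|[set i : 'I_d | ((x \in (B i).1) && (y \in (B i).1))
                       || ((x \in (B i).2) && (y \in (B i).2))]|%:R : R)
      <= (2^-1 + beta) * d%:R.

Definition ndab_sequence (R : realType) (n d : nat)
    (B : 'I_d -> {set 'I_n} * {set 'I_n}) (alpha beta : R) : Prop :=
  (forall i, equitable_bipartition (B i)) /\
  alpha_orthogonal B alpha /\ beta_balanced B beta.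

(* Main.v *)
Require Import Defs.
From Stdlib Require Import ZArith.
From mathcomp Require Import all_boot all_order all_algebra.
From mathcomp Require Import reals exp sequences.
From mathcomp Require Import ring lra zify.
Set Implicit Arguments. Unset Strict Implicit. Unset Printing Implicit Defensive.
Import Order.TTheory GRing.Theory Num.Theory.
Local Open Scope ring_scope.

Local Open Scope nat_scope.
Lemma Zexpn m n : Z.of_nat (m ^ n) = Z.pow (Z.of_nat m) (Z.of_nat n).
Proof.
elim: n => [|n IH]; first by [].
rewrite expnS -multE Nat2Z.inj_mul IH Nat2Z.inj_succ Z.pow_succ_r; last by apply: Zle_0_nat.
by [].
Qed.
Lemma Zmuln m n : Z.of_nat (m * n) = Z.mul (Z.of_nat m) (Z.of_nat n).
Proof. exact: Nat2Z.inj_mul. Qed.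

Lemma check1_gen (a b c d e f : nat) :
  Z.le (Z.pow (Z.of_nat a) (Z.of_nat b)) (Z.mul (Z.pow (Z.of_nat c) (Z.of_nat d)) (Z.pow (Z.of_nat e) (Z.of_nat f))) ->
  (a ^ b <= c ^ d * e ^ f)%N.
Proof. by move=> H; apply/ssrnat.leP; apply/Nat2Z.inj_le; rewrite !(Zmuln, Zexpn). Qed.

Lemma check2_gen (a b c d e f g h i j : nat) :
  Z.le (Z.mul (Z.pow (Z.of_nat a) (Z.of_nat b)) (Z.pow (Z.pow (Z.of_nat c) (Z.of_nat d)) (Z.of_nat j)))
     (Z.pow (Z.mul (Z.pow (Z.of_nat e) (Z.of_nat f)) (Z.pow (Z.of_nat g) (Z.of_nat h))) (Z.of_nat i)) ->
  (a ^ b * (c ^ d) ^ j <= (e ^ f * g ^ h) ^ i)%N.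
Proof. by move=> H; apply/ssrnat.leP; apply/Nat2Z.inj_le; rewrite !(Zmuln, Zexpn). Qed.

Lemma numA : (9 ^ 16 <= 2 ^ 30 * 5 ^ 9)%N.
Proof. apply: check1_gen; vm_compute; discriminate. Qed.

Lemma numB : (2 ^ 32 * (9 ^ 16) ^ 200 <= (2 ^ 30 * 5 ^ 9) ^ 200)%N.
Proof. apply: check2_gen; vm_compute; discriminate. Qed.

Lemma leq_expn2r a b k : (a <= b)%N -> (a ^ k <= b ^ k)%N.
Proof. by move=> h; elim: k => // k IH; rewrite !expnS leq_mul. Qed.

Lemma absineq (A Bb C e d : nat) : (A <= Bb)%N -> (C * A ^ 200 <= Bb ^ 200)%N ->
  (200 * e <= d)%N -> (C ^ e * A ^ d <= Bb ^ d)%N.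
Proof.
move=> h1 h2 h3; rewrite -(subnKC h3) [A ^ _]expnD [Bb ^ _]expnD mulnA.
apply: leq_mul; last exact: leq_expn2r.
rewrite [A ^ _]expnM [Bb ^ _]expnM -expnMn.
exact: leq_expn2r.
Qed.

Lemma tail t n d S : t = 30%N -> n = 9%N -> (9 * d < 16 * S)%N -> (S <= d)%N ->
  ((2 ^ t * 5 ^ n) ^ d <= (2 ^ d * (5 ^ S * 4 ^ (d - S))) ^ 16)%N.
Proof.
move=> ht hn hS hSd.
rewrite expnMn -!expnM expnMn expnMn -!expnM ht hn.
have E : (2 ^ (30 * d) = 2 ^ (d * 16) * 4 ^ (d * 7))%N.
  rewrite -[4%N]/(2 ^ 2)%N -expnM -expnD; congr (2 ^ _); lia.
rewrite E -mulnA leq_mul2l; apply/orP; right.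
set r := (S * 16 - 9 * d)%N.
have e1 : (S * 16 = 9 * d + r)%N by rewrite /r; lia.
have e2 : ((d - S) * 16 + r = d * 7)%N by rewrite /r; lia.
rewrite -(@leq_pmul2r (4 ^ r)); last by rewrite expn_gt0.
rewrite e1 -[5 ^ _ * _ * _]mulnA -expnD e2 [5 ^ (9 * d + r)]expnD.
have hu : (4 ^ r <= 5 ^ r)%N := @leq_expn2r 4 5 r isT.
move: (4 ^ (d * 7))%N (5 ^ (9 * d))%N (4 ^ r)%N (5 ^ r)%N hu => x y u v hu.
by rewrite [y * v * x]mulnC mulnA leq_mul2l hu orbT.
Qed.

Lemma pointwise d m e S : (4 * m ^ 2 <= 2 ^ (2 * e))%N -> (200 * e <= d)%N ->
  (9 * d < 16 * S)%N -> (S <= d)%N ->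
  (4 * m ^ 2 * 9 ^ d <= 2 ^ d * (5 ^ S * 4 ^ (d - S)))%N.
Proof.
move=> hm he hS hSd.
rewrite -(@leq_exp2r _ _ 16); last by [].
apply: (@leq_trans ((2 ^ 32) ^ e * (9 ^ 16) ^ d)).
  rewrite expnMn -expnM (mulnC d 16) expnM.
  apply: leq_mul; last exact: leqnn.
  apply: (@leq_trans ((2 ^ (2 * e)) ^ 16)); first exact: leq_expn2r hm.
  rewrite -!expnM mulnAC; exact: leqnn.
apply: (@leq_trans ((2 ^ 30 * 5 ^ 9) ^ d)).
  exact: absineq numA numB he.
exact: tail.
Qed.

Local Open Scope ring_scope.


Definition part m (v : {ffun 'I_m -> bool}) (l : bool) : {set 'I_m * bool} :=
  [set p | p.2 == v p.1 (+) l].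

Lemma card_pairT m : #|{: 'I_m * bool}| = (m * 2)%N.
Proof. by rewrite card_prod card_ord card_bool. Qed.

Definition enc m (p : 'I_m * bool) : 'I_(m * 2) := cast_ord (card_pairT m) (enum_rank p).
Definition dec m (x : 'I_(m * 2)) : 'I_m * bool := enum_val (cast_ord (esym (card_pairT m)) x).

Lemma encK m : cancel (@enc m) (@dec m).
Proof. by move=> p; rewrite /enc /dec cast_ordK enum_rankK. Qed.
Lemma decK m : cancel (@dec m) (@enc m).
Proof. by move=> x; rewrite /enc /dec enum_valK cast_ordKV. Qed.
Lemma enc_inj m : injective (@enc m).
Proof. exact: can_inj (@encK m). Qed.

Definition Bof d m (w : {ffun 'I_d -> {ffun 'I_m -> bool}}) (i : 'I_d) :=
  (@enc m @: part (w i) false, @enc m @: part (w i) true).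

Lemma partI m (u v : {ffun 'I_m -> bool}) l l' :
  #|part u l :&: part v l'| = #|[set k | u k (+) v k == l (+) l']|.
Proof.
have -> : part u l :&: part v l' =
   (fun k => (k, u k (+) l)) @: [set k | u k (+) v k == l (+) l'].
  apply/setP => -[k b]; rewrite !inE /=; apply/andP/imsetP.
    case=> /eqP -> /eqP e; exists k => //.
    by rewrite inE; move: e; case: (u k) (v k) l l' => [] [] [] [].
  case=> k'; rewrite inE => /eqP e [-> ->] /=; split => //.
  by move: e; case: (u k') (v k') l l' => [] [] [] [].
by rewrite card_imset // => x y [].
Qed.

Lemma bpartB d m (w : {ffun 'I_d -> {ffun 'I_m -> bool}}) i l :
  bpart (Bof w i) l = @enc m @: part (w i) l.
Proof. by case: l. Qed.

Lemma cardB d m (w : {ffun 'I_d -> {ffun 'I_m -> bool}}) i j l l' :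
  #|bpart (Bof w i) l :&: bpart (Bof w j) l'| =
  #|[set k | w i k (+) w j k == l (+) l']|.
Proof.
rewrite !bpartB -imsetI; last by move=> x y _ _; apply: enc_inj.
by rewrite card_imset ?partI //; apply: enc_inj.
Qed.

Lemma equiB d m (w : {ffun 'I_d -> {ffun 'I_m -> bool}}) i :
  equitable_bipartition (Bof w i).
Proof.
apply/and3P; split.
- rewrite /Bof /= -imsetI; last by move=> x y _ _; apply: enc_inj.
  apply/eqP/setP => x; rewrite inE; apply/negbTE/imsetP => -[p].
  by rewrite !inE => /andP [/eqP -> ]; case: (w i p.1).
- apply/eqP/setP => x; rewrite !inE -(decK x).
  case: (boolP (dec x \in part (w i) false)) => h.
    by rewrite (mem_imset _ _ (@enc_inj m)) h.
  rewrite orbC (mem_imset _ _ (@enc_inj m)) //.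
  by move: h; rewrite !inE; case: (dec x).2; case: (w i (dec x).1).
- have := cardB w i i false false; have := cardB w i i true true.
  rewrite /= !setIid => -> ->.
  by apply/eqP; apply: eq_card => k; rewrite !inE.
Qed.

Lemma balB d m (w : {ffun 'I_d -> {ffun 'I_m -> bool}}) (p q : 'I_m * bool) :
  p != q ->
  #|[set i : 'I_d | ((@enc m p \in (Bof w i).1) && (@enc m q \in (Bof w i).1))
                       || ((@enc m p \in (Bof w i).2) && (@enc m q \in (Bof w i).2))]| =
  if p.1 == q.1 then 0%N
  else #|[set i | w i p.1 (+) w i q.1 == p.2 (+) q.2]|.
Proof.
case: p => k b; case: q => k' b' /= hpq.
case: eqP => [ekk|_].
  subst k'; apply/eqP; rewrite cards_eq0; apply/eqP/setP => i.
  rewrite !inE /Bof /= !(mem_imset _ _ (@enc_inj m)) !inE /=.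
  move: hpq; rewrite xpair_eqE eqxx /=.
  by move: (w i k); case: b; case: b'; case.
apply: eq_card => i; rewrite !inE /Bof /= !(mem_imset _ _ (@enc_inj m)) !inE /=.
by clear hpq; case: b b' (w i k) (w i k') => [] [] [] [].
Qed.
Lemma ub (T I : finType) (Q : I -> pred T) :
  (#|[set x | [exists t, Q t x]]| <= \sum_t #|[set x | Q t x]|)%N.
Proof.
under eq_bigr => t _ do rewrite -(sum1dep_card (Q t)) big_mkcond /=.
rewrite -(sum1dep_card (fun x => [exists t, Q t x])) big_mkcond /=.
rewrite exchange_big /=; apply: leq_sum => x _.
case: existsP => // -[t Ht].
by rewrite (bigD1 t) //= Ht.
Qed.

Lemma prod_if (I : finType) (P : pred I) (a b : nat) :
  (\prod_i (if P i then a else b) = a ^ #|[set i | P i]| * b ^ (#|I| - #|[set i | P i]|))%N.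
Proof.
rewrite (bigID P) /= (eq_bigr (fun _ => a)) => [|i ->] //.
rewrite [X in (_ * X)%N](eq_bigr (fun _ => b)) => [|i /negbTE ->] //.
rewrite !prod_nat_const.
have -> : #|[set i | P i]| = #|P| by apply: eq_card => i; rewrite inE.
by rewrite -(cardC P) addKn.
Qed.

Lemma colbound d m e (k k' : 'I_m) (s : bool) : k != k' ->
  (4 * m ^ 2 <= 2 ^ (2 * e))%N -> (200 * e <= d)%N ->
  (4 * m ^ 2 * #|[set w : {ffun 'I_d -> {ffun 'I_m -> bool}} |
       (9 * d < 16 * #|[set i | w i k (+) w i k' == s]|)%N]| <= (2 ^ m) ^ d)%N.
Proof.
move=> hk hm he.
pose c (v : {ffun 'I_m -> bool}) := v k (+) v k' == s.
pose h (v : {ffun 'I_m -> bool}) : nat := if c v then 5%N else 4%N.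
have hsum : (2 * \sum_v h v = 9 * 2 ^ m)%N.
  pose fl (v : {ffun 'I_m -> bool}) : {ffun 'I_m -> bool} :=
    [ffun x => if x == k then ~~ v x else v x].
  have flK : involutive fl.
    by move=> v; apply/ffunP => x; rewrite !ffunE; case: eqP => // ->; rewrite negbK.
  have hk' : (k' == k) = false by rewrite eq_sym (negbTE hk).
  have hfl v : (h v + h (fl v) = 9)%N.
    rewrite /h /c !ffunE eqxx hk'; by case: (v k); case: (v k'); case: (s : bool).
  rewrite mul2n -addnn {2}(reindex_inj (inv_inj flK)) -big_split /=.
  rewrite (eq_bigr (fun _ => 9%N)) => [|v _]; last exact: hfl.
  by rewrite big_const iter_addn_0 card_ffun card_bool card_ord mulnC.
have hw (w : {ffun 'I_d -> {ffun 'I_m -> bool}}) :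
    (\prod_i h (w i) = 5 ^ #|[set i | w i k (+) w i k' == s]| *
                       4 ^ (d - #|[set i | w i k (+) w i k' == s]|))%N.
  by rewrite /h (prod_if (fun i => c (w i))) card_ord.
have hsumw : (\sum_(w : {ffun 'I_d -> {ffun 'I_m -> bool}}) \prod_i h (w i) = (\sum_v h v) ^ d)%N.
  rewrite -(bigA_distr_bigA (fun (i : 'I_d) (v : {ffun 'I_m -> bool}) => h v)) /=.
  by rewrite prod_nat_const card_ord.
set bad := [set w : {ffun 'I_d -> {ffun 'I_m -> bool}} |
       (9 * d < 16 * #|[set i | w i k (+) w i k' == s]|)%N].
have key : (4 * m ^ 2 * #|bad| * 9 ^ d <= (2 ^ m) ^ d * 9 ^ d)%N.
  apply: (@leq_trans (\sum_(w in bad) 2 ^ d * \prod_i h (w i))%N).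
    rewrite mulnAC mulnC -sum_nat_const; apply: leq_sum => w; rewrite inE => hb.
    rewrite hw; apply: (pointwise hm he hb).
    rewrite -[X in (_ <= X)%N](card_ord d); exact: max_card.
  apply: (@leq_trans (\sum_(w : {ffun 'I_d -> {ffun 'I_m -> bool}}) 2 ^ d * \prod_i h (w i))%N).
    rewrite [X in (X <= _)%N]big_mkcond; apply: leq_sum => w _; case: ifP => //.
  rewrite -big_distrr /= hsumw -expnMn hsum expnMn mulnC.
  done.
by rewrite leq_pmul2r ?expn_gt0 in key.
Qed.

Lemma prodr_if (R : comPzRingType) (I : finType) (P : pred I) (x : R) :
  x ^+ #|[set i | P i]| = \prod_i (if P i then x else 1).
Proof. by rewrite -prodr_const big_mkcond; apply: eq_bigr => i _; rewrite inE. Qed.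

Lemma fin_real (R : realType) (nb Em X4 Y Q p M : R) : 0 < Em -> 0 < X4 -> 0 <= Q ->
  0 <= p -> 0 <= Y -> nb * (Em * X4) <= M * Q -> M <= p * Em * Y -> nb <= p * Q * (Y / X4).
Proof.
move=> hE hX hQ hp hY h1 h2.
rewrite mulrA ler_pdivlMr //.
have h3 : M * Q <= p * Em * Y * Q by apply: ler_wpM2r.
rewrite -(ler_pM2l hE).
have -> : Em * (nb * X4) = nb * (Em * X4) by ring.
have -> : Em * (p * Q * Y) = p * Em * Y * Q by ring.
exact: le_trans h1 h3.
Qed.

Lemma rowbound (R : realType) d m (i j : 'I_d) (c : bool) (a : R) :
  i != j -> 0 <= a -> a < 4^-1 ->
  (#|[set w : {ffun 'I_d -> {ffun 'I_m -> bool}} |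
      (4^-1 + a) * (m * 2)%:R < (#|[set k | w i k (+) w j k == c]|)%:R]|%:R : R)
    <= ((2 ^ m) ^ d)%:R * expR (16 / 15 * (a ^+ 2 * m%:R) - 4 * (a ^+ 2 * m%:R)).
Proof.
move=> hij a0 a4.
set E := expR a.
have E0 : 0 < E := expR_gt0 a.
set e2 := E ^+ 2.
pose phi (w : {ffun 'I_d -> {ffun 'I_m -> bool}}) : {ffun 'I_d -> {ffun 'I_m -> bool}} :=
  [ffun i' => if i' == j then [ffun k => w j k (+) w i k] else w i'].
have hji : (i == j) = false by apply/negbTE.
have phiK : involutive phi.
  move=> w; apply/ffunP => i'; rewrite !ffunE.
  case: eqP => [->|//]; apply/ffunP => k; rewrite !ffunE eqxx hji /=.
  by rewrite ffunE; case: (w j k); case: (w i k).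
have hsum : \sum_(w : {ffun 'I_d -> {ffun 'I_m -> bool}})
     e2 ^+ #|[set k | w i k (+) w j k == c]| =
     (1 + e2) ^+ m * ((2 ^ m)%:R) ^+ d.-1.
  under eq_bigr do rewrite prodr_if.
  rewrite (reindex_inj (inv_inj phiK)) /=.
  under eq_bigr => w _.
    rewrite (eq_bigr (fun k => if w j k == c then e2 else 1)); last first.
      by move=> k _; rewrite !ffunE eqxx hji ffunE; case: (w i k); case: (w j k).
    rewrite (_ : \prod_k _ = \prod_(i' : 'I_d) (if i' == j then
          \prod_(k : 'I_m) (if w i' k == c then e2 else 1) else 1)); last first.
      by rewrite (bigD1 j) //= eqxx [X in _ * X]big1 ?mulr1 // => i' /negbTE ->.
    over.
  rewrite -(bigA_distr_bigA (fun (i' : 'I_d) (v : {ffun 'I_m -> bool}) =>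
     if i' == j then \prod_(k : 'I_m) (if v k == c then e2 else 1) else 1)) /=.
  rewrite (bigD1 j) //= eqxx.
  rewrite -(bigA_distr_bigA (fun (k : 'I_m) (b : bool) => if b == c then e2 else 1)) /=.
  under eq_bigr do rewrite big_bool.
  rewrite prodr_const card_ord; congr (_ * _); first by congr (_ ^+ _); case: c; [exact: addrC | by []].
  under eq_bigr => i' hi' do rewrite (negbTE hi') sumr_const card_ffun card_bool card_ord.
  by rewrite prodr_const cardC1 card_ord.
set L := a ^+ 2 * m%:R.
set T := (4^-1 + a) * (m * 2)%:R.
set bad := [set w : {ffun 'I_d -> {ffun 'I_m -> bool}} |
      T < (#|[set k | w i k (+) w j k == c]|)%:R].
have e20 : 0 < e2 by rewrite exprn_gt0.
have hb : #|bad|%:R * (E ^+ m * expR (4 * L)) <= (1 + e2) ^+ m * ((2 ^ m)%:R) ^+ d.-1.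
  rewrite -hsum.
  have -> : E ^+ m * expR (4 * L) = expR (2 * a * T).
    rewrite /E -expRM_natr -expRD; congr expR; rewrite /T /L natrM /=; by field.
  rewrite (_ : _ * _ = \sum_(w in bad) expR (2 * a * T)); last by rewrite sumr_const mulr_natl.
  apply: (@le_trans _ _ (\sum_(w in bad) e2 ^+ #|[set k | w i k (+) w j k == c]|)).
    apply: ler_sum => w; rewrite inE => hw.
    rewrite /e2 -exprM /E -expRM_natr ler_expR natrM /=.
    move: hw; rewrite /T; nra.
  rewrite [X in X <= _]big_mkcond; apply: ler_sum => w _; case: ifP => _ //.
  exact: exprn_ge0 (ltW e20).
set K := (1 - a ^+ 2)^-1.
have ha2 : 0 < 1 - a ^+ 2 by nra.
have hE : 1 + e2 <= 2 * E * K.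
  have h1 : 1 - a <= E^-1 by rewrite -expRN; apply: expR_ge1Dx.
  have h2 : 1 + a <= E by apply: expR_ge1Dx.
  have h3 : E * (1 - a) <= 1.
    by have := ler_wpM2l (ltW E0) h1; rewrite mulfV // lt0r_neq0.
  rewrite /K ler_pdivlMr // /e2; nra.
have hK : K <= expR (16 / 15 * a ^+ 2).
  apply: le_trans (expR_ge1Dx _).
  rewrite /K -[X in X <= _]div1r ler_pdivrMr //.
  have hu : a ^+ 2 <= 16^-1 by nra.
  have hu0 : 0 <= a ^+ 2 by apply: sqr_ge0.
  nra.
have hM : (1 + e2) ^+ m <= (2 ^ m)%:R * E ^+ m * expR (16 / 15 * L).
  apply: le_trans (_ : (2 * E * K) ^+ m <= _).
    apply: lerXn2r; rewrite ?nnegrE //; first by rewrite addr_ge0 // ltW.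
    by rewrite mulr_ge0 // ?mulr_ge0 // ?ltW // /K invr_gt0.
  rewrite !exprMn natrX -!mulrA; apply: ler_wpM2l; first by rewrite exprn_ge0.
  apply: ler_wpM2l; first exact: exprn_ge0 (ltW E0).
  rewrite /L (mulrA 15^-1) (mulrA 16) expRM_natr; apply: lerXn2r; rewrite ?nnegrE.
  - by rewrite /K invr_ge0 ltW.
  - exact: expR_ge0.
  - by rewrite mulrA.
have d0 : (0 < d)%N by apply: leq_ltn_trans (ltn_ord i).
rewrite natrX (_ : (2 ^ m)%:R ^+ d = (2 ^ m)%:R * (2 ^ m)%:R ^+ d.-1 :> R); last by rewrite -exprS prednK.
rewrite expRB.
apply: fin_real hb hM.
- exact: exprn_gt0.
- exact: expR_gt0.
- exact: exprn_ge0.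
- by rewrite ler0n.
- exact: expR_ge0.
Qed.

Lemma aux_field (R : realType) (L x : R) : x != 0 -> 2 * L / (x * 2) * x = L.
Proof. by move=> hx; field; rewrite hx. Qed.

Theorem lemma5p1 (R : realType) (d n : nat) :
  (200 <= d)%N -> ~~ odd n -> (n <= 2 ^ (d %/ 200))%N ->
  exists B : 'I_d -> {set 'I_n} * {set 'I_n},
    ndab_sequence B (Num.sqrt (2 * ln (d%:R : R) / n%:R)) (16^-1 : R).
Proof.
move=> hd hn hnd.
have [m em] : exists m, n = (m * 2)%N.
  by exists n./2; rewrite -[LHS](odd_double_half n) (negbTE hn) add0n muln2.
subst n. idtac.
set e := (d %/ 200)%N.
have he : (200 * e <= d)%N by rewrite mulnC leq_divM.
have hm : (4 * m ^ 2 <= 2 ^ (2 * e))%N.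
  by rewrite -[4%N]/(2 ^ 2)%N -expnMn (mulnC 2 e) expnM leq_exp2r // mulnC.
set a : R := Num.sqrt _.
set T : R := (4^-1 + a) * (m * 2)%:R.
pose rowbad (w : {ffun 'I_d -> {ffun 'I_m -> bool}}) :=
  [exists t : 'I_d * 'I_d * bool, (t.1.1 != t.1.2) &&
     (T < (#|[set k | w t.1.1 k (+) w t.1.2 k == t.2]|)%:R)].
pose colbad (w : {ffun 'I_d -> {ffun 'I_m -> bool}}) :=
  [exists t : 'I_m * 'I_m * bool, (t.1.1 != t.1.2) &&
     (9 * d < 16 * #|[set i | w i t.1.1 (+) w i t.1.2 == t.2]|)%N].
have [w /andP [hr hc]] : exists w, ~~ rowbad w && ~~ colbad w.
  pose N := ((2 ^ m) ^ d)%N.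
  have hN : #|{: {ffun 'I_d -> {ffun 'I_m -> bool}}}| = N.
    by rewrite card_ffun card_ffun card_bool !card_ord.
  have N0 : (0 < N)%N by rewrite expn_gt0 expn_gt0.
  pose Srow := (\sum_(t : 'I_d * 'I_d * bool)
     #|[set w : {ffun 'I_d -> {ffun 'I_m -> bool}} | (t.1.1 != t.1.2) &&
     (T < (#|[set k | w t.1.1 k (+) w t.1.2 k == t.2]|)%:R)%R]|)%N.
  pose Scol := (\sum_(t : 'I_m * 'I_m * bool)
     #|[set w : {ffun 'I_d -> {ffun 'I_m -> bool}} | (t.1.1 != t.1.2) &&
     (9 * d < 16 * #|[set i | w i t.1.1 (+) w i t.1.2 == t.2]|)%N]|)%N.
  have hcol : (2 * Scol <= N)%N.
    case: (posnP m) => [m0|mpos].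
      rewrite /Scol big1 ?muln0 // => -[[[k hk] ?] ?]; by exfalso; move: hk; rewrite m0 ltn0.
    have : (4 * m ^ 2 * Scol <= (m * m * 2) * N)%N.
      rewrite /Scol big_distrr /=.
      apply: (@leq_trans (\sum_(t : 'I_m * 'I_m * bool) N)%N).
        apply: leq_sum => t _ /=; case: (eqVneq t.1.1 t.1.2) => h.
          apply: (leq_trans _ (leq0n N)); rewrite leqn0 muln_eq0 cards_eq0; apply/orP; right.
          by apply/eqP/setP => w; rewrite !inE.
        apply: leq_trans _ (@colbound d m e t.1.1 t.1.2 t.2 h hm he); rewrite leq_mul2l; apply/orP; right.
        by apply: subset_leq_card; apply/subsetP => w; rewrite !inE.
      by rewrite big_const iter_addn_0 card_prod card_prod !card_ord card_bool mulnC.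
    clearbody N; nia.
  have hrow : Srow = 0%N \/ (Srow%:R * 2 < N%:R :> R).
    case: (leP (m%:R : R) T) => hT.
      left; rewrite /Srow big1 // => t _; apply/eqP; rewrite cards_eq0; apply/eqP/setP => w.
      rewrite !inE; apply/negbTE; rewrite negb_and -leNgt; apply/orP; right.
      apply: le_trans hT; rewrite ler_nat -[X in (_ <= X)%N](card_ord m); exact: max_card.
    right.
    have mpos : (0 < m)%N.
      case: (posnP m) => // m0; move: hT; rewrite /T m0 mul0n mulr0; lra.
    have mR : (0 : R) < m%:R by rewrite ltr0n.
    have a0 : 0 <= a by apply: sqrtr_ge0.
    have a4 : a < 4^-1.
      move: hT; rewrite /T natrM /=; nra.
    set D : R := d%:R.
    have D200 : 200 <= D by rewrite /D ler_nat.
    set L := ln D.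
    have L0 : 0 <= L by apply: ln_ge0; lra.
    have DL : expR L = D by rewrite /L lnK // posrE; lra.
    have hL : a ^+ 2 * m%:R = L.
      rewrite /a -/D -/L sqr_sqrtr; last by apply: divr_ge0; [lra | rewrite ler0n].
      by rewrite natrM /= aux_field // lt0r_neq0.
    set X := expR (16 / 15 * (a ^+ 2 * m%:R) - 4 * (a ^+ 2 * m%:R)).
    have hS : (Srow%:R : R) <= ((d * d * 2)%N)%:R * (N%:R * X).
      rewrite /Srow natr_sum.
      apply: (@le_trans _ _ (\sum_(t : 'I_d * 'I_d * bool) (N%:R * X))).
        apply: ler_sum => t _; case: (eqVneq t.1.1 t.1.2) => h.
          rewrite (_ : #|_| = 0%N); first by rewrite mulr_ge0 ?ler0n ?expR_ge0.
          by apply/eqP; rewrite cards_eq0; apply/eqP/setP => w; rewrite !inE.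
        apply: (le_trans _ (@rowbound R d m t.1.1 t.1.2 t.2 a h a0 a4)).
        rewrite ler_nat; apply: subset_leq_card; apply/subsetP => w; rewrite !inE.
        done.
      rewrite sumr_const (_ : #|_| = (d * d * 2)%N) ?mulr_natl //.
      by rewrite !card_prod !card_ord card_bool.
    have hZ : X * D * D < 4^-1.
      have W4 : 4 < expR (14 / 15 * L).
        have Y2 : expR (L / 2) * expR (L / 2) = D by rewrite -expRD -DL; congr expR; field.
        have Y0 := expR_gt0 (L / 2).
        have : expR (L / 2) <= expR (14 / 15 * L) by rewrite ler_expR; lra.
        nra.
      have : X * D * D * expR (14 / 15 * L) = 1.
        have E : 16 / 15 * L - 4 * L + L + L + 14 / 15 * L = 0 by lra.
        by rewrite /X -DL -!expRD hL E expR0.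
      have := expR_gt0 (14 / 15 * L); have : 0 <= X by apply: expR_ge0.
      nra.
    have N0R : (0 : R) < N%:R by rewrite ltr0n.
    move: hS; rewrite !natrM /= -/D.
    have X0 : 0 <= X by apply: expR_ge0.
    nra.
  have hlt : (Srow + Scol < N)%N.
    case: hrow => [->|h]; first by rewrite add0n; lia.
    rewrite -(ltr_nat R) natrD; move: hcol; rewrite -(ler_nat R) natrM /=; lra.
  case: (pickP (fun w => ~~ rowbad w && ~~ colbad w)) => [w hw|hnone]; first by exists w.
  have hc : #|[set w | rowbad w || colbad w]| = N.
    have -> : [set w | rowbad w || colbad w] = [set: {ffun 'I_d -> {ffun 'I_m -> bool}}].
      by apply/setP => w; rewrite !inE; move: (hnone w) => /=; case: (rowbad w); case: (colbad w).
    by rewrite cardsT hN.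
  have : (#|[set w | rowbad w || colbad w]| <= Srow + Scol)%N.
    have -> : [set w | rowbad w || colbad w] = [set w | rowbad w] :|: [set w | colbad w].
      by apply/setP => w; rewrite !inE.
    rewrite cardsU; apply: leq_trans (leq_subr _ _) _.
    by apply: leq_add; apply: ub.
  by rewrite hc leqNgt hlt.
exists (Bof w); split; [|split].
- exact: equiB.
- move=> i j l l' hij; rewrite cardB.
  move/existsPn: hr => /(_ (i, j, l (+) l')) /=.
  by rewrite neq_ltn hij /= -leNgt.
- move=> x y hxy.
  have hpq : dec x != dec y by apply: contra hxy => /eqP /(can_inj (@decK m)) ->.
  have := balB w hpq; rewrite !decK => ->.
  case: eqP => [_|/eqP hk]; first by have := ler0n R d; rewrite /=; lra.
  move/existsPn: hc => /(_ ((dec x).1, (dec y).1, (dec x).2 (+) (dec y).2)) /=.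
  rewrite hk /= -leqNgt -(ler_nat R) !natrM /=; lra.
Qed.
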